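(* For any $n\in\mathbb{N}$, the monoid $\mathrm{rps}_n$ does not satisfy any non-trivial identity of length less than or equal to $n$.
   Context: Let $\mathcal{A}_n=\{1<2<\cdots<n\}$. An rPS tableau is a finite (possibly empty) sequence of nonempty bottom-justified columns of boxes filled with positive integers, such that the entries of each column are weakly decreasing from top to bottom and the bottom entries of the columns form a strictly increasing sequence from left to right. Right insertion of a symbol $a$ into an rPS tableau $B$: if $a$ is strictly greater than every entry of the bottom row, append a new column consisting of $a$ at the right end; otherwise, let $z$ be the leftmost bottom-row entry with $z\geq a$ and put $a$ in a new box at the bottom of the column of $z$ (the previous entries of that column move up one box). For $w=w_1\cdots w_k$, $\mathfrak{R}_r(w)$ is obtained by starting with the empty tableau and right-inserting $w_1,\dots,w_k$ in order. The monoid $\mathrm{rps}_n$ is the quotient of $\mathcal{A}_n^*$ by the congruence $u\equiv v\iff\mathfrak{R}_r(u)=\mathfrak{R}_r(v)$. An identity is a formal equality $u=v$ of words over a countable alphabet of variables; it is non-trivial if $u\neq v$ as words; a monoid $M$ satisfies it if equality holds under every substitution of elements of $M$ for the variables (i.e. for every morphism from the free monoid on the variables to $M$). The length of an identity $u=v$ is $|u|$, the length of its left-hand side. *)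

(* Defs.v *)
From mathcomp Require Import all_boot.
Set Implicit Arguments. Unset Strict Implicit. Unset Printing Implicit Defensive.

(* An rPS tableau is a sequence of columns (left to right); each column is a
   nonempty list of positive integers listed from BOTTOM to TOP, so the head
   of a column is its bottom-row entry. *)
Definition rps_tableau := seq (seq nat).

Fixpoint rps_rinsert (B : rps_tableau) (a : nat) : rps_tableau :=
  match B with
  | [::] => [:: [:: a]]
  | c :: B' => if a <= head 0 c then (a :: c) :: B' else c :: rps_rinsert B' a
  end.

Definition rps_Rr (w : seq nat) : rps_tableau := foldl rps_rinsert [::] w.

Definition word_over (n : nat) (w : seq nat) : bool :=
  all (fun a => (0 < a) && (a <= n)) w.

(* Identities are pairs of words over the countable variable alphabet nat.
   A morphism from the free monoid on the variables into rps_n = A_n^* / ==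
   is determined by choosing, for each variable x, an element of rps_n,
   i.e. (a representative) word sigma x over A_n; the image of a word u is
   the class of the concatenation of the sigma x along u. *)
Definition subst_word (sigma : nat -> seq nat) (u : seq nat) : seq nat :=
  flatten (map sigma u).

Definition rps_satisfies (n : nat) (u v : seq nat) : Prop :=
  forall sigma : nat -> seq nat,
    (forall x, word_over n (sigma x)) ->
    rps_Rr (subst_word sigma u) = rps_Rr (subst_word sigma v).

(* Main.v *)
Require Import Defs.
From mathcomp Require Import all_boot.
Set Implicit Arguments. Unset Strict Implicit. Unset Printing Implicit Defensive.

Definition geqr : rel nat := fun a b => b <= a.

Lemma L0 c B w : exists d B', foldl rps_rinsert (c :: B) w = (d ++ c) :: B'.
Proof.
elim: w c B => [|a w IH] c B /=; first by exists [::], B.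
case: ifP => _.
  by have [d [B' ->]] := IH (a :: c) B; exists (d ++ [:: a]), B'; rewrite -catA.
by have [d [B' ->]] := IH c (rps_rinsert B a); exists d, B'.
Qed.

Lemma R_cons_last a w : exists d B', rps_Rr (a :: w) = (rcons d a) :: B'.
Proof.
rewrite /rps_Rr /=; have [d [B' ->]] := L0 [:: a] [::] w.
by exists d, B'; rewrite cats1.
Qed.

Lemma size_ins B a : sumn (map size (rps_rinsert B a)) = (sumn (map size B)).+1.
Proof.
elim: B => [|c B IH] //=; case: ifP => _ //=; by rewrite IH addnS.
Qed.

Lemma size_fold B w : sumn (map size (foldl rps_rinsert B w)) = sumn (map size B) + size w.
Proof.
elim: w B => [|a w IH] B /=; first by rewrite addn0.
by rewrite IH size_ins addSn addnS.
Qed.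

Lemma size_subst1 u : size (subst_word (fun _ => [:: 1]) u) = size u.
Proof. by elim: u => //= x u IH; rewrite /subst_word /= in IH *; rewrite IH. Qed.

Lemma ins_shift B a : 0 < a ->
  rps_rinsert (map (map succn) B) a.+1 = map (map succn) (rps_rinsert B a).
Proof.
move=> a0; elim: B => [|c B IH] //=.
case: c => [|h c] /=.
  by rewrite leqNgt a0 /= IH.
by rewrite ltnS; case: ifP => _ //=; rewrite IH.
Qed.

Lemma fold_shift B w : all (fun a => 0 < a) w ->
  foldl rps_rinsert (map (map succn) B) (map succn w) = map (map succn) (foldl rps_rinsert B w).
Proof.
elim: w B => [|a w IH] B //= /andP [a0 wp].
by rewrite ins_shift // IH.
Qed.

Lemma L1 c B w : all (fun a => 0 < a) w -> head 0 c = 1 ->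
  exists c', foldl rps_rinsert (c :: B) w = c' :: foldl rps_rinsert B [seq a <- w | 1 < a].
Proof.
elim: w c B => [|a w IH] c B /=; first by exists c.
move=> /andP [a0 wp] hc; rewrite hc.
case: (ltnP 1 a) => ha.
  by apply: IH.
have -> : a = 1 by apply/eqP; rewrite eqn_leq ha.
by apply: IH.
Qed.

Lemma L3 c p : path geqr (head 0 c) p -> foldl rps_rinsert [:: c] p = [:: catrev p c].
Proof.
elim: p c => [|a p IH] c //= /andP [ha hp].
by rewrite /geqr in ha; rewrite ha; apply: IH.
Qed.

Lemma path_shift a s : path geqr a s -> path geqr a.+1 (map succn s).
Proof.
elim: s a => [|b s IHs] a //= /andP [hab hb].
by rewrite /geqr ltnS in hab *; rewrite hab /= IHs.
Qed.

Lemma Lq s : sorted geqr s -> all (fun a => 0 < a) s ->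
  exists d, foldl rps_rinsert [::] (map succn s ++ [:: 1]) = [:: 1 :: d].
Proof.
case: s => [|a s] /=; first by exists [::].
move=> hs /andP [a0 sp].
rewrite cats1 L3 /=.
  by exists (catrev (map succn s) [:: a.+1]); rewrite !catrevE rev_rcons.
rewrite rcons_path; apply/andP; split.
  exact: path_shift.
by rewrite /geqr last_map.
Qed.

Lemma subst_cons s x u : subst_word s (x :: u) = s x ++ subst_word s u.
Proof. by []. Qed.

Lemma subst_pos s u : (forall x, all (fun a => 0 < a) (s x)) ->
  all (fun a => 0 < a) (subst_word s u).
Proof. by move=> h; elim: u => //= x u IH; rewrite subst_cons all_cat h. Qed.

Lemma wo_pos n s : word_over n s -> all (fun a => 0 < a) s.
Proof. by elim: s => //= a s IH /andP [/andP [-> _] /IH]. Qed.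

Lemma claim u : forall n v, 0 < n -> size u <= n -> size v = size u -> u != v ->
  exists s : nat -> seq nat, (forall x, word_over n (s x)) /\ (forall x, sorted geqr (s x)) /\
     rps_Rr (subst_word s u) <> rps_Rr (subst_word s v).
Proof.
elim: u => [|x u1 IH] n v n0 hu hv neq.
  by case: v hv neq.
case: v hv neq => [|y v1] // [hv] neq.
case: (eqVneq x y) => [exy|nxy].
  subst y.
  have neq1 : u1 != v1 by apply: contra neq => /eqP ->.
  have u1n : 0 < size u1 by move: hv neq1; case: (u1) => //; case: (v1).
  have n1 : 0 < n.-1 by case: n hu {n0} => //= m; rewrite ltnS => /(leq_trans u1n).
  have hu1 : size u1 <= n.-1 by case: n hu {n0 n1}.
  have [s [hw [hs hne]]] := IH n.-1 v1 n1 hu1 hv neq1.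
  pose t := fun w => map succn (s w) ++ (if w == x then [:: 1] else [::]).
  have tp : forall w, all (fun a => 0 < a) (t w).
    by move=> w; rewrite /t all_cat all_map; apply/andP; split;
      [apply/allP => a _ /= | case: (w == x)].
  have sp : forall w, all (fun a => 0 < a) (s w) by move=> w; apply: (wo_pos (hw w)).
  have filt : forall w, [seq a <- subst_word t w | 1 < a] = map succn (subst_word s w).
    elim => //= w ww IHw; rewrite !subst_cons filter_cat map_cat IHw /t filter_cat.
    have -> : [seq a <- if w == x then [:: 1] else [::] | 1 < a] = [::] by case: (w == x).
    rewrite cats0 filter_map; congr (_ ++ _); congr (map _ _).
    by apply/all_filterP; apply: sub_all (sp w) => a.
  have key : forall w, exists c, rps_Rr (subst_word t (x :: w)) =
      c :: map (map succn) (rps_Rr (subst_word s w)).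
    move=> w; rewrite /rps_Rr subst_cons foldl_cat {1}/t eqxx.
    have [d ->] := Lq (hs x) (sp x).
    have [c' ->] := @L1 (1 :: d) [::] _ (subst_pos w tp) erefl.
    by exists c'; rewrite filt (fold_shift [::] (subst_pos w sp)).
  exists t; split.
    move=> w; rewrite /t /word_over all_cat all_map; apply/andP; split.
      apply: sub_all (hw w) => a /= /andP [_ an]; rewrite /=.
      by rewrite (leq_ltn_trans an) // ltn_predL.
    by case: (w == x) => //=; rewrite n0.
  split.
    move=> w; rewrite /t; case: (w == x); last first.
      by rewrite cats0; have := hs w; case: (s w) => //= a l; elim: l a => //= b l IHl a /andP [h1 h2];
        rewrite /geqr ltnS in h1 *; rewrite h1 /= IHl.
    case hsw: (s w) => [|a l] //=; rewrite cats1 rcons_path; apply/andP; split.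
      have := hs w; rewrite hsw /=; elim: l a {hsw} => //= b l IHl a /andP [h1 h2].
      by rewrite /geqr ltnS in h1 *; rewrite h1 /= IHl.
    by rewrite /geqr last_map.
  have [c1 e1] := key u1; have [c2 e2] := key v1.
  rewrite e1 e2 => [[_ /inj_map]] h; apply: hne; apply: h.
  exact: inj_map succn_inj.
case: n n0 hu => // [[|m]] _ hu.
  clear IH neq; case: u1 hu hv => // _ hv; case: v1 hv => // _.
  exists (fun w => if w == x then [:: 1] else [::]); split.
    by move=> w; case: (w == x).
  split; first by move=> w; case: (w == x).
  by rewrite /subst_word /= eqxx eq_sym (negbTE nxy).
exists (fun w => if w == x then [:: 2] else if w == y then [:: 1] else [::]); split.
  by move=> w; case: (w == x); case: (w == y).
split; first by move=> w; case: (w == x); case: (w == y).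
rewrite !subst_cons eqxx eq_sym (negbTE nxy) eqxx /=.
move: (subst_word _ u1) (subst_word _ v1) => w1 w2.
have [d1 [B1 ->]] := R_cons_last 2 w1.
have [d2 [B2 ->]] := R_cons_last 1 w2.
by move=> [] /(congr1 (last 0)); rewrite !last_rcons.
Qed.

Theorem proposition4p8 (n : nat) (u v : seq nat) :
  0 < n -> u != v -> size u <= n -> ~ rps_satisfies n u v.
Proof.
move=> n0 neq hu sat.
case: (eqVneq (size v) (size u)) => [hv|hv].
  have [s [hw [_ hne]]] := claim n0 hu hv neq.
  by apply: hne; apply: sat.
have := sat (fun _ => [:: 1]) (fun _ => ltac:(by rewrite /word_over /= n0)).
move/(congr1 (fun B => sumn (map size B))); rewrite /rps_Rr !size_fold !size_subst1 /=.
by rewrite !add0n => e; move: hv; rewrite e eqxx.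
Qed.
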